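(* Let $K_n$ be the complete directed graph on $[n]$ with edges $(i,j)$ for all $i<j$. A subgraph $H\subseteq K_n$ gives a face $\tilde Q_H$ of $\tilde Q_{K_n}$ if and only if there are integers $0=n_0<n_1<\dots<n_\ell<n_{\ell+1}=n$ ($\ell\ge0$) such that $H=K_{[n_0+1,n_1]}\sqcup K_{[n_1+1,n_2]}\sqcup\dots\sqcup K_{[n_\ell+1,n]}$, i.e. $E(H)=\{(i,j):i<j,\ i,j\in[n_k+1,n_{k+1}]\text{ for some }k\}$.
   Context: $[a,b]=\{a,a+1,\dots,b\}$, and $K_P$ denotes the complete graph on $P$ with edges oriented from smaller to larger vertex. Subgraphs $H\subseteq K_n$ have vertex set $[n]$. $\tilde Q_H=\mathrm{conv}(\{\mathbf 0\}\cup\{\mathbf e_i-\mathbf e_j:(i,j)\in E(H)\})\subset\mathbb R^n$. *)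

(* Defs.v *)
(* Vertices [n] = {1..n} are encoded 0-based as 'I_n. *)
From HB Require Import structures.
From mathcomp Require Import all_boot all_order all_algebra.
Set Implicit Arguments. Unset Strict Implicit. Unset Printing Implicit Defensive.
Import Order.TTheory GRing.Theory Num.Theory.
Local Open Scope ring_scope.

Definition evec (R : realFieldType) (n : nat) (i : 'I_n) : 'rV[R]_n := delta_mx 0 i.

Definition dotv (R : realFieldType) (n : nat) (c x : 'rV[R]_n) : R :=
  \sum_(i < n) c 0 i * x 0 i.

Definition in_conv (R : realFieldType) (n : nat) (P : 'rV[R]_n -> Prop)
  (x : 'rV[R]_n) : Prop :=
  exists (k : nat) (v : 'I_k -> 'rV[R]_n) (w : 'I_k -> R),
    [/\ forall i, P (v i), forall i, 0 <= w i,
        \sum_(i < k) w i = 1 & x = \sum_(i < k) w i *: v i].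

Definition Qtilde (R : realFieldType) (n : nat) (H : {set 'I_n * 'I_n})
  : 'rV[R]_n -> Prop :=
  in_conv (fun y => y = 0 \/
     exists i j : 'I_n, (i, j) \in H /\ y = evec R i - evec R j).

Definition Kn (n : nat) : {set 'I_n * 'I_n} := [set e : 'I_n * 'I_n | (e.1 < e.2)%N].

Definition is_face (R : realFieldType) (n : nat) (P F : 'rV[R]_n -> Prop) : Prop :=
  exists (c : 'rV[R]_n) (b : R),
    (forall x, P x -> dotv c x <= b) /\
    (forall x, F x <-> (P x /\ dotv c x = b)).

(* Main.v *)
Require Import Defs.
From HB Require Import structures.
From mathcomp Require Import all_boot all_order all_algebra.
From mathcomp Require Import zify ring lra.
Import Order.TTheory GRing.Theory Num.Theory.

Lemma nth_le_sorted (s : seq nat) a b : sorted ltn s -> (a <= b)%N -> (b < size s)%N ->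
  (nth 0 s a <= nth 0 s b)%N.
Proof.
move=> ss ab bs; rewrite leq_eqVlt in ab; case/orP: ab => [/eqP -> //|ab].
apply: ltnW; apply: (sorted_ltn_nth ltn_trans 0 ss) => //.
by rewrite inE (ltn_trans ab bs).
Qed.

Lemma block_has (s : seq nat) (n i j : nat) :
  sorted ltn s -> head 0%N s = 0%N -> last 0%N s = n -> (i < j)%N -> (j < n)%N ->
  (exists k, [/\ (k.+1 < size s)%N, (nth 0%N s k <= i)%N & (j < nth 0%N s k.+1)%N])
  <-> ~~ has (fun m => (i < m <= j)%N) s.
Proof.
move=> ss hs ls ij jn; split.
  case=> k [ks ki jk]; apply/hasPn => m ms; apply/negP => /andP [im mj].
  have tS := index_mem m s; rewrite ms in tS.
  have em := nth_index 0 ms.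
  case: (leqP (index m s) k) => tk.
    have := @nth_le_sorted s _ _ ss tk (ltnW ks); rewrite em; lia.
  have := @nth_le_sorted s _ _ ss tk tS; rewrite em; lia.
move=> nh.
case: s ss hs ls nh => [|a s'] ss hs ls nh; rewrite /= in hs ls.
  lia.
subst a.
have hasI : has (fun m => (i < m)%N) (0%N :: s').
  apply/hasP; exists n; last lia.
  by rewrite -ls mem_last.
set f := find (fun m => (i < m)%N) (0%N :: s').
have fs : (f < size (0%N :: s'))%N by rewrite -has_find.
have nf := nth_find 0 hasI; rewrite -/f in nf.
have f0 : f != 0%N.
  apply/eqP => f0; move: nf; rewrite f0 /=; lia.
exists f.-1; split.
- by rewrite prednK ?lt0n.
- have := before_find 0 (i:=f.-1) (_ : (f.-1 < f)%N); rewrite -/f => /(_ _)/negbT.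
  rewrite -ltnNge ltnS; apply; by case: (f) f0.
- idtac.
  move/hasPn: nh => /(_ (nth 0 (0%N :: s') f) (mem_nth _ fs)).
  by rewrite nf /= -ltnNge.
Qed.

Lemma build (R : realFieldType) (n : nat) (f : nat -> R) : (1 <= n)%N ->
  (forall a b, (a <= b)%N -> (b < n)%N -> (f a <= f b)%R) ->
  exists s : seq nat, [/\ (2 <= size s)%N, sorted ltn s, head 0%N s = 0%N, last 0%N s = n &
   forall i j, (i < j)%N -> (j < n)%N -> (f i = f j <-> ~~ has (fun m => (i < m <= j)%N) s)].
Proof.
move=> n1 mono.
set p := fun m => [|| m == 0%N, m == n | f m.-1 != f m].
exists (filter p (iota 0 n.+1)).
have iE : iota 0 n.+1 = 0%N :: iota 1 n by [].
have iE2 : iota 0 n.+1 = rcons (iota 0 n) n by rewrite -addn1 iotaD cats1.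
split.
- rewrite iE /= {1}/p /= ltnS lt0n size_eq0 -has_filter; apply/hasP; exists n.
    by rewrite mem_iota; apply/andP; split => //; lia.
  by rewrite /= eqxx orbT.
- apply: sorted_filter; [exact: ltn_trans | exact: iota_ltn_sorted].
- by rewrite iE.
- by rewrite iE2 filter_rcons /p eqxx orbT last_rcons.
move=> i j ij jn; split.
  move=> fij; apply/hasPn => m; rewrite mem_filter mem_iota => /andP [pm _].
  apply/negP => /andP [im mj].
  move: pm; rewrite /p.
  have -> : (m == 0%N) = false by apply/eqP; lia.
  have -> : (m == n) = false by apply/eqP; lia.
  rewrite /= => /eqP; apply.
  have h1 := mono i m.-1 (_ : (i <= m.-1)%N) (_ : (m.-1 < n)%N).
  have h2 := mono m.-1 m (_ : (m.-1 <= m)%N) (_ : (m < n)%N).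
  have h3 := mono m j mj jn.
  apply/eqP; rewrite eq_le h2 ?leq_pred //=; last lia.
  rewrite -fij in h3; apply: le_trans h3 (h1 _ _); lia.
move/hasPn => nh.
suff: forall d, (i + d <= j)%N -> f i = f (i + d).
  by move/(_ (j - i)%N); rewrite subnKC ?(ltnW ij) //; apply; lia.
elim=> [|d IH] hd; first by rewrite addn0.
rewrite IH; last lia.
have := nh (i + d.+1)%N; rewrite mem_filter mem_iota /p.
have -> : (i + d.+1 == 0)%N = false by apply/eqP; lia.
have -> : (i + d.+1 == n)%N = false by apply/eqP; lia.
rewrite /= addnS /=.
have -> : (i < (i + d).+1 <= j)%N by apply/andP; split; lia.
have -> : ((i + d).+1 < 0 + n.+1)%N by lia.
rewrite andbT => H1; apply/eqP; apply/negPn/negP => /H1; done.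
Qed.

Lemma count_split (s : seq nat) i j : (i <= j)%N ->
  count (fun m => (m <= j)%N) s = (count (fun m => (m <= i)%N) s + count (fun m => (i < m <= j)%N) s)%N.
Proof.
move=> ij; elim: s => [//|a s IH] /=; rewrite IH.
case: (leqP a i) => ai /=.
  by rewrite (leq_trans ai ij) /= add1n addSn.
case: (leqP a j) => aj /=; lia.
Qed.

Local Open Scope ring_scope.

Section Geo.
Variables (R : realFieldType) (n : nat).

Lemma coord_sum k (w : 'I_k -> R) (v : 'I_k -> 'rV[R]_n) i :
  (\sum_(t < k) w t *: v t) 0 i = \sum_(t < k) w t * v t 0 i.
Proof. by rewrite summxE; apply: eq_bigr => t _; rewrite mxE. Qed.

Lemma dotv_sum c k (w : 'I_k -> R) (v : 'I_k -> 'rV[R]_n) :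
  dotv c (\sum_(t < k) w t *: v t) = \sum_(t < k) w t * dotv c (v t).
Proof.
rewrite /dotv.
under eq_bigr => i _ do rewrite coord_sum mulr_sumr.
rewrite exchange_big /=; apply: eq_bigr => t _; rewrite mulr_sumr.
by apply: eq_bigr => i _; rewrite mulrCA.
Qed.

Lemma evecE (a i : 'I_n) : evec R a 0 i = (i == a)%:R.
Proof. by rewrite /evec mxE eqxx. Qed.

Lemma sum_delta (c : 'rV[R]_n) (a : 'I_n) : \sum_(i < n) c 0 i * ((0 == 0 :> 'I_1) && (i == a))%:R = c 0 a.
Proof.
rewrite (bigD1 a) //= !eqxx /= mulr1 big1 ?addr0 //.
by move=> i /negbTE ->; rewrite ?andbF mulr0.
Qed.

Lemma dotv_evecB c (a b : 'I_n) : dotv c (evec R a - evec R b) = c 0 a - c 0 b.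
Proof.
rewrite /dotv.
under eq_bigr => i _ do rewrite !mxE mulrBr.
by rewrite sumrB !sum_delta.
Qed.

Lemma dotv0 c : dotv c (0 : 'rV[R]_n) = 0.
Proof. by rewrite /dotv big1 // => i _; rewrite mxE mulr0. Qed.

Lemma conv_pt (P : 'rV[R]_n -> Prop) y : P y -> in_conv P y.
Proof.
move=> Py; exists 1%N, (fun _ => y), (fun _ => 1); split => //.
- by rewrite big_ord1.
- by rewrite big_ord1 scale1r.
Qed.

Lemma Qt_mono (H H' : {set 'I_n * 'I_n}) x : H \subset H' -> @Qtilde R n H x -> @Qtilde R n H' x.
Proof.
move=> /subsetP sHH' [k [v [w [Pv w0 w1 xE]]]]; exists k, v, w; split => // t.
case: (Pv t) => [->|[a [b [ab ->]]]]; first by left.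
by right; exists a, b; split => //; apply: sHH'.
Qed.

Lemma vertex (H : {set 'I_n * 'I_n}) (i j : 'I_n) : i != j ->
  @Qtilde R n H (evec R i - evec R j) -> (i, j) \in H.
Proof.
move=> ij [k [v [w [Pv w0 w1 xE]]]].
apply/negPn/negP => nH.
have key : forall t, v t 0 i - v t 0 j <= 1.
  move=> t; case: (Pv t) => [->|[a [b [abH ->]]]].
    by rewrite !mxE subrr ler01.
  rewrite !mxE !eqxx /=.
  case ia: (i == a); case jb: (j == b).
  - by move/eqP: ia => ia; move/eqP: jb => jb; subst; rewrite abH in nH.
  - have := ler0n R (i == b); have := ler0n R (j == a); rewrite /=; lra.
  - have := ler0n R (i == b); have := ler0n R (j == a); rewrite /=; lra.
  - have := ler0n R (i == b); have := ler0n R (j == a); rewrite /=; lra.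
have h2 : (evec R i - evec R j) 0 i - (evec R i - evec R j) 0 j = 2.
  by rewrite !mxE !eqxx (negbTE ij) eq_sym (negbTE ij) /=; ring.
have : (evec R i - evec R j) 0 i - (evec R i - evec R j) 0 j <= 1.
  rewrite xE !coord_sum -sumrB -w1; apply: ler_sum => t _.
  rewrite -mulrBr -[X in _ <= X]mulr1; apply: ler_wpM2l => //.
rewrite h2; lra.
Qed.

End Geo.

Theorem mainTheorem17 (R : realFieldType) (n : nat) (Hn : (1 <= n)%N)
  (H : {set 'I_n * 'I_n}) (HsubK : H \subset Kn n) :
  is_face (@Qtilde R n (Kn n)) (@Qtilde R n H) <->
  exists s : seq nat,
    [/\ (2 <= size s)%N, sorted ltn s, head 0%N s = 0%N, last 0%N s = n &
        forall i j : 'I_n, (i, j) \in H <->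
          ((i < j)%N /\ exists k : nat,
              [/\ (k.+1 < size s)%N, (nth 0%N s k <= i)%N & (j < nth 0%N s k.+1)%N])].
Proof.
have inKn : forall i j : 'I_n, ((i, j) \in Kn n) = (i < j)%N by move=> i j; rewrite inE.
have edgeK : forall i j : 'I_n, (i < j)%N -> @Qtilde R n (Kn n) (evec R i - evec R j).
  move=> i j ij; apply: conv_pt; right; exists i, j; split => //; by rewrite inKn.
split.
  case=> c [b [valid Feq]].
  have F0 : @Qtilde R n H 0 by apply: conv_pt; left.
  have b0 : b = 0 by have [_ <-] := (Feq 0).1 F0; rewrite dotv0.
  subst b.
  have mono : forall i j : 'I_n, (i < j)%N -> c 0 i <= c 0 j.
    move=> i j ij; have := valid _ (edgeK _ _ ij); rewrite dotv_evecB subr_le0 //.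
  have charH : forall i j : 'I_n, (i, j) \in H <-> (i < j)%N /\ c 0 i = c 0 j.
    move=> i j; split.
      move=> ijH; have ij : (i < j)%N by rewrite -inKn; apply: (subsetP HsubK).
      split => //.
      have Q : @Qtilde R n H (evec R i - evec R j).
        by apply: conv_pt; right; exists i, j.
      have [_] := (Feq _).1 Q; rewrite dotv_evecB => /eqP; rewrite subr_eq0 => /eqP //.
    case=> ij cij; apply: vertex; first by rewrite neq_ltn ij.
    by apply/Feq; split; [exact: edgeK | rewrite dotv_evecB cij subrr].
  pose f : nat -> R := fun m => oapp (fun o : 'I_n => c 0 o) 0 (insub m).
  have fE : forall i : 'I_n, f i = c 0 i by move=> i; rewrite /f valK.
  have fmono : forall a b, (a <= b)%N -> (b < n)%N -> f a <= f b.
    move=> a b ab bn; have an : (a < n)%N by apply: leq_ltn_trans ab bn.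
    rewrite /f (@insubT _ _ 'I_n a an) (@insubT _ _ 'I_n b bn) /=.
    move: ab; rewrite leq_eqVlt => /orP [/eqP ab|ab].
      by subst a; rewrite (bool_irrelevance an bn).
    by apply: mono.
  have [s [s2 ss hs ls sP]] := @build R n f Hn fmono.
  exists s; split => // i j; rewrite charH; split.
    case=> ij cij; split => //; apply/(block_has _ _ _ _ ss hs ls ij (ltn_ord j)).
    by apply/sP => //; rewrite !fE.
  case=> ij /(block_has _ _ _ _ ss hs ls ij (ltn_ord j)) nh; split => //.
  by rewrite -!fE; apply/sP.
case=> s [s2 ss hs ls Hs].
pose c : 'rV[R]_n := \row_(i < n) (count (fun m => (m <= i)%N) s)%:R.
have cE : forall i : 'I_n, c 0 i = (count (fun m => (m <= i)%N) s)%:R by move=> i; rewrite mxE.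
have key : forall i j : 'I_n, (i < j)%N ->
    c 0 i <= c 0 j /\ (c 0 i = c 0 j <-> ~~ has (fun m => (i < m <= j)%N) s).
  move=> i j ij; rewrite !cE (count_split _ _ _ (ltnW ij)); split.
    by rewrite ler_nat leq_addr.
  split.
    move/eqP; rewrite eqr_nat -{1}[count _ _]addn0 eqn_add2l has_count => /eqP <-.
    by [].
  rewrite has_count -leqNgt leqn0 => /eqP ->; by rewrite addn0.
have Hc : forall i j : 'I_n, (i, j) \in H <-> (i < j)%N /\ c 0 i = c 0 j.
  move=> i j; rewrite Hs; split; case=> ij h; split => //.
    by apply/(key _ _ ij).2; apply/(block_has _ _ _ _ ss hs ls ij (ltn_ord j)).
  by apply/(block_has _ _ _ _ ss hs ls ij (ltn_ord j)); apply/(key _ _ ij).2.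
have vle0 : forall y, (y = 0 \/ exists i j : 'I_n, (i, j) \in Kn n /\ y = evec R i - evec R j) ->
    dotv c y <= 0.
  move=> y [->|[a [b [abK ->]]]]; first by rewrite dotv0.
  rewrite dotv_evecB subr_le0; rewrite inKn in abK; exact: (key _ _ abK).1.
exists c, 0; split.
  move=> x [k [v [w [Pv w0 w1 ->]]]]; rewrite dotv_sum; apply: sumr_le0 => t _.
  by apply: mulr_ge0_le0 => //; apply: vle0.
move=> x; split.
  move=> Qx; split; first by apply: Qt_mono HsubK Qx.
  case: Qx => k [v [w [Pv w0 w1 ->]]]; rewrite dotv_sum big1 // => t _.
  case: (Pv t) => [->|[a [b [abH ->]]]]; first by rewrite dotv0 mulr0.
  by rewrite dotv_evecB (proj2 ((Hc a b).1 abH)) subrr mulr0.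
case=> [[k [v [w [Pv w0 w1 xE]]]] dx].
have term0 : forall t, w t * dotv c (v t) = 0.
  move=> t; apply/eqP; rewrite -oppr_eq0; move: t; apply/forallP.
  have : \sum_(t < k) - (w t * dotv c (v t)) == 0 by rewrite sumrN -dotv_sum -xE dx oppr0.
  rewrite psumr_eq0; last by move=> t _; rewrite oppr_ge0; apply: mulr_ge0_le0 => //; apply: vle0.
  move/allP => h; apply/forallP => t; exact: h t (mem_index_enum t).
exists k, (fun t => if w t == 0 then 0 else v t), w; split => //.
  move=> t; case: eqP => [_|wt]; first by left.
  have := term0 t; move/eqP; rewrite mulf_eq0 (introF eqP wt) /= => /eqP d0.
  case: (Pv t) => [->|[a [b [abK vE]]]]; first by left.
  right; exists a, b; split => //; apply/Hc; rewrite inKn in abK; split => //.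
  by move: d0; rewrite vE dotv_evecB => /eqP; rewrite subr_eq0 => /eqP.
rewrite xE; apply: eq_bigr => t _; case: eqP => [->|_] //; by rewrite !scale0r.
Qed.
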